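(* Over a finite field $\mathbb{F}_q$, let $N_{\mathbb{E}_6}$ and $N_{\mathbb{E}_8}$ be the numbers of $\mathbb{F}_q$-points of $X_{\mathbb{E}_6}(1,\dots,1)$ and $X_{\mathbb{E}_8}(1,\dots,1)$, and for $\alpha\in\mathbb{F}_q^*$ let $N_{\mathbb{E}_7}(\alpha)$ be the number of $\mathbb{F}_q$-points of $X_{\mathbb{E}_7}(1,\dots,1,\alpha)$, where $\alpha$ is the value on the leaf of the long branch of $\mathbb{E}_7$ and all other values are $1$. Then $N_{\mathbb{E}_6}=q^6+q^4+q^3+q^2+1$; $N_{\mathbb{E}_7}(\alpha)=q^7+q^5-q^2-1$ if $\alpha\neq-1$; $N_{\mathbb{E}_7}(-1)=q^7+2q^5+q^3-q^2-1$; and $N_{\mathbb{E}_8}=q^8+q^6+q^5+q^4+q^3+q^2+1$.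
   Context: For a finite tree $T$ and a family $\boldsymbol{\alpha}=(\alpha_t)_{t\in T}$ of invertible elements of a field, $X_T(\boldsymbol{\alpha})$ is the affine variety with coordinates $x_t,x'_t$ ($t\in T$) defined by $x_tx'_t=1+\alpha_t\prod_{s-t}x_s$, the product over the neighbors $s$ of $t$. For $m=6,7,8$, $\mathbb{E}_m$ is the tree with a central vertex from which three branches (paths) emanate, containing $1$, $2$ and $m-4$ further vertices respectively; the long branch is the one with $m-4$ vertices. *)

(* Defs.v *)
From HB Require Import structures.
From mathcomp Require Import all_boot all_order all_algebra all_field.
Set Implicit Arguments. Unset Strict Implicit. Unset Printing Implicit Defensive.
Import GRing.Theory.
Local Open Scope ring_scope.

(* A tree on the vertex set 'I_m is given by a symmetric adjacency relation.
   X_T(alpha) : x_t x'_t = 1 + alpha_t * prod_{s - t} x_s.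
   Its F-points are pairs (x, x') of functions 'I_m -> F. *)
Definition XT_points (F : finFieldType) (m : nat) (adj : rel 'I_m)
  (alpha : 'I_m -> F) : {set {ffun 'I_m -> F} * {ffun 'I_m -> F}} :=
  [set p : {ffun 'I_m -> F} * {ffun 'I_m -> F} | [forall t : 'I_m,
      p.1 t * p.2 t == 1 + alpha t * \prod_(s : 'I_m | adj s t) p.1 s]].

Definition XT_count (F : finFieldType) (m : nat) (adj : rel 'I_m)
  (alpha : 'I_m -> F) : nat := #|XT_points adj alpha|.

(* E_m (m = 6,7,8): central vertex 0; short branch {1}; branch of length 2:
   0 - 2 - 3; long branch 0 - 4 - 5 - ... - (m-1), with leaf m-1. *)
Definition E_edge (i j : nat) : bool :=
  [|| (i == 0%N) && (j == 1%N), (i == 0%N) && (j == 2%N),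
      (i == 2%N) && (j == 3%N), (i == 0%N) && (j == 4%N)
    | (4 <= i)%N && (j == i.+1)].

Definition E_adj (m : nat) : rel 'I_m :=
  fun i j => E_edge i j || E_edge j i.

(* Main.v *)
Require Import Defs.
From HB Require Import structures.
From mathcomp Require Import all_boot all_order all_algebra all_field.
From mathcomp Require Import ring.
Import GRing.Theory.
Local Open Scope ring_scope.

Definition cw {F : finFieldType} (a r : F) : int :=
  if a != 0 then 1 else if 1 + r == 0 then (#|F|)%:Z else 0.

Lemma card_sol (F : finFieldType) (a r : F) :
  (#|[pred y : F | a * y == r]|)%:Z = if a != 0 then 1 else if r == 0 then (#|F|)%:Z else 0.
Proof.
case: ifP => [a0|/negbFE/eqP->].
  rewrite (@eq_card1 _ (r / a)) // => y; rewrite inE /=.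
  apply/eqP/eqP => [<-|->]; first by field.
  by field.
case: ifP => [/eqP->|r0].
  by congr Posz; apply: eq_card => y; rewrite inE /= mul0r eqxx.
by congr Posz; apply: eq_card0 => y; rewrite inE /= mul0r eq_sym r0.
Qed.

Lemma count_sum (F : finFieldType) (m : nat) (adj : rel 'I_m) (alpha : 'I_m -> F) :
  (XT_count adj alpha)%:Z = \sum_(x : {ffun 'I_m -> F})
     \prod_(t : 'I_m) cw (x t) (alpha t * \prod_(s : 'I_m) (if adj s t then x s else 1)).
Proof.
rewrite /XT_count /XT_points; set A := [set _ | _].
transitivity (\sum_(x : {ffun 'I_m -> F}) \sum_(x' : {ffun 'I_m -> F}) (if (x, x') \in A then 1 else 0 : int)).
  rewrite -sum1_card -natz natr_sum big_mkcond pair_bigA; apply: eq_bigr => -[x x'] _ /=.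
  by case: ifP.
apply: eq_bigr => x _.
have H1 : forall (T : finType) (P : pred T), \sum_(y : T) ((P y)%:R : int) = (#|P|)%:Z.
  move=> T P; rewrite -natz -sum1_card natr_sum big_mkcond /=.
  rewrite [RHS]big_mkcond /=; apply: eq_bigr => i _; rewrite unfold_in; by case: (P i).
symmetry; under eq_bigr => t _ do rewrite /cw -big_mkcond -card_sol -H1.
rewrite bigA_distr_bigA /=.
apply: eq_bigr => x' _; rewrite inE /=.
case: forallP => [H|H].
  rewrite big1 // => t _; by rewrite H.
have [t Ht] : exists t, ~~ (x t * x' t == 1 + alpha t * \prod_(s | adj s t) x s).
  apply/existsP; rewrite -negb_forall; apply/negP => /forallP; exact: H.
rewrite (bigD1 t) //= (negbTE Ht) mul0r //.
Qed.

Definition fcons {F : finFieldType} {n : nat} (a : F) (y : {ffun 'I_n -> F}) : {ffun 'I_n.+1 -> F} :=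
  [ffun i => if unlift ord0 i is Some j then y j else a].

Lemma fcons0 (F : finFieldType) n (a : F) (y : {ffun 'I_n -> F}) : fcons a y ord0 = a.
Proof. by rewrite ffunE unlift_none. Qed.

Lemma fconsS (F : finFieldType) n (a : F) (y : {ffun 'I_n -> F}) j : fcons a y (lift ord0 j) = y j.
Proof. by rewrite ffunE liftK. Qed.

Lemma sum_ffunS (F : finFieldType) n (G : {ffun 'I_n.+1 -> F} -> int) :
  \sum_(x : {ffun 'I_n.+1 -> F}) G x = \sum_(a : F) \sum_(y : {ffun 'I_n -> F}) G (fcons a y).
Proof.
rewrite (pair_bigA _ (fun a y => G (fcons a y))) /=.
rewrite (reindex (fun p : F * {ffun 'I_n -> F} => fcons p.1 p.2)) //=.
exists (fun x : {ffun 'I_n.+1 -> F} => (x ord0, [ffun j => x (lift ord0 j)])).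
  move=> [a y] _ /=; rewrite fcons0; congr pair; apply/ffunP => j; by rewrite ffunE fconsS.
move=> x _ /=; apply/ffunP => i; rewrite ffunE.
case: unliftP => [j ->|->]; by rewrite ?ffunE.
Qed.

Lemma sum_ffun0 (F : finFieldType) (G : {ffun 'I_0 -> F} -> int) :
  \sum_(x : {ffun 'I_0 -> F}) G x = G [ffun i => 0].
Proof.
rewrite (big_pred1 [ffun i => 0]) // => x /=; apply/esym/eqP/ffunP => -[] //.
Qed.

Fixpoint Phi {F : finFieldType} (al : F) (k : nat) (b y : F) : int :=
  match k with
  | 0 => cw b (al * y)
  | k'.+1 => \sum_(a : F) cw b (y * a) * Phi al k' a b
  end.

Definition Psi {F : finFieldType} (al : F) (k : nat) (y : F) : int := \sum_(b : F) Phi al k b y.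

Lemma sum_ffun6 (F : finFieldType) (G : {ffun 'I_6 -> F} -> int) :
  \sum_x G x = \sum_(x0 : F) \sum_(x1 : F) \sum_(x2 : F) \sum_(x3 : F) \sum_(x4 : F) \sum_(x5 : F)
    G (fcons x0 (fcons x1 (fcons x2 (fcons x3 (fcons x4 (fcons x5 [ffun i : 'I_0 => (0:F)])))))).
Proof.
rewrite sum_ffunS; apply: eq_bigr => x0 _; rewrite sum_ffunS; apply: eq_bigr => x1 _.
rewrite sum_ffunS; apply: eq_bigr => x2 _; rewrite sum_ffunS; apply: eq_bigr => x3 _.
rewrite sum_ffunS; apply: eq_bigr => x4 _; rewrite sum_ffunS; apply: eq_bigr => x5 _.
by rewrite sum_ffun0.
Qed.

Lemma sum2_mul (F : finFieldType) (c : int) (f g : F -> int) :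
  c * (\sum_i f i) * (\sum_j g j) = \sum_i \sum_j (c * f i * g j).
Proof.
rewrite (big_distrr c) big_distrl /=; apply: eq_bigr => i _; rewrite big_distrr /=.
by apply: eq_bigr => j _.
Qed.

Lemma mul_sum2 (F : finFieldType) (a b : int) (f : F -> int) :
  a * (b * \sum_i f i) = \sum_i (a * b * f i).
Proof. by rewrite mulrA big_distrr. Qed.

Lemma E6_red (F : finFieldType) :
  (XT_count (@E_adj 6) (fun _ => (1 : F)))%:Z =
  \sum_(x0 : F) \sum_(x1 : F) \sum_(x2 : F) \sum_(x4 : F)
    (cw x0 (x1 * (x2 * x4)) * Phi 1 0 x1 x0 * Phi 1 1 x2 x0 * Phi 1 1 x4 x0).
Proof.
rewrite count_sum sum_ffun6; apply: eq_bigr => x0 _; apply: eq_bigr => x1 _.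
apply: eq_bigr => x2 _; rewrite exchange_big; apply: eq_bigr => x4 _ /=.
rewrite sum2_mul; apply: eq_bigr => x3 _; apply: eq_bigr => x5 _.
rewrite !big_ord_recl !big_ord0 !fconsS !fcons0 /= !mul1r !mulr1.
ring.
Qed.

Lemma sum_ffun7 (F : finFieldType) (G : {ffun 'I_7 -> F} -> int) :
  \sum_x G x = \sum_(x0 : F) \sum_(x1 : F) \sum_(x2 : F) \sum_(x3 : F) \sum_(x4 : F) \sum_(x5 : F) \sum_(x6 : F)
    G (fcons x0 (fcons x1 (fcons x2 (fcons x3 (fcons x4 (fcons x5 (fcons x6 [ffun i : 'I_0 => (0:F)]))))))).
Proof.
rewrite sum_ffunS; apply: eq_bigr => x0 _; rewrite sum_ffunS; apply: eq_bigr => x1 _.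
rewrite sum_ffunS; apply: eq_bigr => x2 _; rewrite sum_ffunS; apply: eq_bigr => x3 _.
rewrite sum_ffunS; apply: eq_bigr => x4 _; rewrite sum_ffunS; apply: eq_bigr => x5 _.
rewrite sum_ffunS; apply: eq_bigr => x6 _.
by rewrite sum_ffun0.
Qed.

Lemma sum_ffun8 (F : finFieldType) (G : {ffun 'I_8 -> F} -> int) :
  \sum_x G x = \sum_(x0 : F) \sum_(x1 : F) \sum_(x2 : F) \sum_(x3 : F) \sum_(x4 : F) \sum_(x5 : F) \sum_(x6 : F) \sum_(x7 : F)
    G (fcons x0 (fcons x1 (fcons x2 (fcons x3 (fcons x4 (fcons x5 (fcons x6 (fcons x7 [ffun i : 'I_0 => (0:F)])))))))).
Proof.
rewrite sum_ffunS; apply: eq_bigr => x0 _; rewrite sum_ffunS; apply: eq_bigr => x1 _.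
rewrite sum_ffunS; apply: eq_bigr => x2 _; rewrite sum_ffunS; apply: eq_bigr => x3 _.
rewrite sum_ffunS; apply: eq_bigr => x4 _; rewrite sum_ffunS; apply: eq_bigr => x5 _.
rewrite sum_ffunS; apply: eq_bigr => x6 _; rewrite sum_ffunS; apply: eq_bigr => x7 _.
by rewrite sum_ffun0.
Qed.

Lemma E7_red (F : finFieldType) (al : F) :
  (XT_count (@E_adj 7) (fun t : 'I_7 => if val t == 6%N then al else 1))%:Z =
  \sum_(x0 : F) \sum_(x1 : F) \sum_(x2 : F) \sum_(x4 : F)
    (cw x0 (x1 * (x2 * x4)) * Phi 1 0 x1 x0 * Phi 1 1 x2 x0 * Phi al 2 x4 x0).
Proof.
rewrite count_sum sum_ffun7; apply: eq_bigr => x0 _; apply: eq_bigr => x1 _.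
apply: eq_bigr => x2 _; rewrite exchange_big; apply: eq_bigr => x4 _ /=.
rewrite sum2_mul; apply: eq_bigr => x3 _; apply: eq_bigr => x5 _.
rewrite mul_sum2; apply: eq_bigr => x6 _.
rewrite !big_ord_recl !big_ord0 !fconsS !fcons0 /= !mul1r !mulr1.
ring.
Qed.

Lemma E8_red (F : finFieldType) :
  (XT_count (@E_adj 8) (fun _ => (1 : F)))%:Z =
  \sum_(x0 : F) \sum_(x1 : F) \sum_(x2 : F) \sum_(x4 : F)
    (cw x0 (x1 * (x2 * x4)) * Phi 1 0 x1 x0 * Phi 1 1 x2 x0 * Phi 1 3 x4 x0).
Proof.
rewrite count_sum sum_ffun8; apply: eq_bigr => x0 _; apply: eq_bigr => x1 _.
apply: eq_bigr => x2 _; rewrite exchange_big; apply: eq_bigr => x4 _ /=.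
rewrite sum2_mul; apply: eq_bigr => x3 _; apply: eq_bigr => x5 _.
rewrite mul_sum2; apply: eq_bigr => x6 _.
rewrite mul_sum2; apply: eq_bigr => x7 _.
rewrite !big_ord_recl !big_ord0 !fconsS !fcons0 /= !mul1r !mulr1.
ring.
Qed.

Lemma sumD0 (F : finFieldType) (g : F -> int) :
  \sum_(a : F) g a = g 0 + \sum_(a : F | a != 0) g a.
Proof. by rewrite (bigD1 0). Qed.

Lemma sum_nz_const (F : finFieldType) (c : int) :
  \sum_(a : F | a != 0) c = ((#|F|)%:Z - 1) * c.
Proof.
rewrite sumr_const -mulr_natr mulrC; congr (_ * _).
have -> : #|[pred a : F | a != 0]| = #|predC1 (0:F)| by apply: eq_card.
rewrite cardC1; have : (0 < #|F|)%N by apply/card_gt0P; exists 0.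
case: #|F| => // n _ /=; by rewrite natz -addn1 PoszD addrK.
Qed.

Lemma sum_nz_eq (F : finFieldType) (f : F -> int) (z : F) : z != 0 ->
  \sum_(a : F | a != 0) (if a == z then f a else 0) = f z.
Proof.
move=> zn; rewrite -big_mkcondr /=.
rewrite (big_pred1 z) // => a /=; apply/andP/eqP => [[_ /eqP] //|->]; by split.
Qed.

Lemma sum_eq (F : finFieldType) (f : F -> int) (z : F) :
  \sum_(a : F) (if a == z then f a else 0) = f z.
Proof. by rewrite -big_mkcond big_pred1_eq. Qed.

Lemma inv_eq (F : finFieldType) (y a : F) : y != 0 -> (1 + y * a == 0) = (a == - y^-1).
Proof.
move=> yn; apply/eqP/eqP => [H|->].
  apply: (mulfI yn); rewrite mulrN mulfV //; apply/eqP; by rewrite -addr_eq0 addrC H.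
by rewrite mulrN mulfV // subrr.
Qed.

Lemma cw0 (F : finFieldType) (r : F) : cw 0 r = if 1 + r == 0 then (#|F|)%:Z else 0.
Proof. by rewrite /cw eqxx. Qed.

Lemma cwnz (F : finFieldType) (b r : F) : b != 0 -> cw b r = 1.
Proof. by rewrite /cw => ->. Qed.

Lemma ifmul (b : bool) (x y : int) : (if b then x else 0) * y = if b then x * y else 0.
Proof. by case: b; rewrite ?mul0r. Qed.

Lemma PhiS (F : finFieldType) (al : F) k b y :
  Phi al k.+1 b y = if b != 0 then Psi al k b
                    else if y != 0 then (#|F|)%:Z * Phi al k (- y^-1) 0 else 0.
Proof.
rewrite /=; case: ifP => bn.
  by rewrite /Psi; apply: eq_bigr => a _; rewrite cwnz // mul1r.
move/negbFE/eqP: bn => ->.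
case: ifP => yn.
  under eq_bigr => a _ do rewrite cw0 inv_eq // ifmul.
  by rewrite (sum_eq _ (fun a : F => (#|F|)%:Z * Phi al k a 0)).
move/negbFE/eqP: yn => ->.
rewrite big1 // => a _; by rewrite cw0 mul0r addr0 oner_eq0 mul0r.
Qed.

Lemma Phi_z (F : finFieldType) (al : F) k a : a != 0 ->
  Phi al k a 0 = if k is k'.+1 then Psi al k' a else 1.
Proof. case: k => [|k] an; [by rewrite /= cwnz | by rewrite PhiS an]. Qed.

Definition S {F : finFieldType} (al : F) k := \sum_(b : F | b != 0) Psi al k b.

Lemma PsiS (F : finFieldType) (al : F) k y : y != 0 ->
  Psi al k.+1 y = (#|F|)%:Z * Phi al k (- y^-1) 0 + S al k.
Proof.
move=> yn; rewrite {1}/Psi sumD0 (PhiS _ al k 0 y) eqxx yn /S; congr (_ + _).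
by apply: eq_bigr => b bn; rewrite (PhiS _ al k b y) bn.
Qed.

Lemma Psi0 (F : finFieldType) (al : F) y :
  Psi al 0 y = ((#|F|)%:Z - 1) + (if 1 + al * y == 0 then (#|F|)%:Z else 0).
Proof.
rewrite /Psi sumD0 /= cw0 addrC; congr (_ + _).
rewrite -[_ - 1]mulr1 -sum_nz_const; apply: eq_bigr => b bn; by rewrite cwnz.
Qed.

Lemma hub (F : finFieldType) (f g h : F -> F -> int) :
  \sum_(x0 : F) \sum_(x1 : F) \sum_(x2 : F) \sum_(x4 : F)
    (cw x0 (x1 * (x2 * x4)) * f x1 x0 * g x2 x0 * h x4 x0)
  = (#|F|)%:Z * \sum_(x1 : F) \sum_(x2 : F) \sum_(x4 : F)
        (if x1 * (x2 * x4) == -1 then f x1 0 * g x2 0 * h x4 0 else 0)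
    + \sum_(y : F | y != 0) ((\sum_a f a y) * (\sum_a g a y) * (\sum_a h a y)).
Proof.
rewrite sumD0; congr (_ + _).
  rewrite mulr_sumr; apply: eq_bigr => x1 _; rewrite mulr_sumr; apply: eq_bigr => x2 _.
  rewrite mulr_sumr; apply: eq_bigr => x4 _; rewrite cw0 addrC addr_eq0.
  case: ifP => _; ring.
apply: eq_bigr => y yn.
rewrite !mulr_suml; apply: eq_bigr => x1 _ /=.
rewrite -mulrA mulr_suml mulr_sumr; apply: eq_bigr => x2 _ /=.
rewrite mulrA mulr_sumr; apply: eq_bigr => x4 _ /=.
by rewrite cwnz // mul1r.
Qed.

Lemma mul_eqN1 (F : finFieldType) (a p : F) : p != 0 -> (a * p == -1) = (a == - p^-1).
Proof. by move=> pn; rewrite -inv_eq // addrC -subr_eq0 opprK mulrC. Qed.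

Lemma zero_part (F : finFieldType) (f g h : F -> F -> int) :
  (forall x, f x 0 = if x != 0 then 1 else 0) -> g 0 0 = 0 -> h 0 0 = 0 ->
  \sum_(x1 : F) \sum_(x2 : F) \sum_(x4 : F)
        (if x1 * (x2 * x4) == -1 then f x1 0 * g x2 0 * h x4 0 else 0)
  = (\sum_a g a 0) * (\sum_a h a 0).
Proof.
move=> Hf Hg Hh.
rewrite exchange_big; under eq_bigr => x2 _ do rewrite exchange_big.
rewrite mulr_suml; apply: eq_bigr => x2 _ /=; rewrite mulr_sumr; apply: eq_bigr => x4 _ /=.
have [p0|pn] := eqVneq (x2 * x4) 0.
  rewrite big1; last by move=> x1 _; rewrite p0 mulr0 eq_sym oppr_eq0 oner_eq0.
  by move/eqP: p0; rewrite mulf_eq0 => /orP [] /eqP ->; rewrite ?Hg ?Hh ?mulr0 ?mul0r.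
under eq_bigr => x1 _ do rewrite mul_eqN1 //.
rewrite (sum_eq _ (fun x1 => f x1 0 * g x2 0 * h x4 0)) Hf.
by rewrite oppr_eq0 invr_eq0 pn mul1r.
Qed.

Lemma Psi_0nz (F : finFieldType) (al : F) y : al != 0 ->
  Psi al 0 y = ((#|F|)%:Z - 1) + (if y == - al^-1 then (#|F|)%:Z else 0).
Proof. by move=> an; rewrite Psi0 inv_eq. Qed.

Lemma S0 (F : finFieldType) (al : F) : al != 0 ->
  S al 0 = ((#|F|)%:Z - 1) * ((#|F|)%:Z - 1) + (#|F|)%:Z.
Proof.
move=> an; rewrite /S; under eq_bigr => b _ do rewrite Psi_0nz //.
rewrite big_split /= sum_nz_const; congr (_ + _).
by rewrite (sum_nz_eq _ (fun _ => (#|F|)%:Z)) // oppr_eq0 invr_eq0.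
Qed.

Lemma Psi1 (F : finFieldType) (al : F) y : y != 0 ->
  Psi al 1 y = (#|F|)%:Z + S al 0.
Proof.
move=> yn; rewrite PsiS // Phi_z ?mulr1 //; by rewrite oppr_eq0 invr_eq0.
Qed.

Lemma S1 (F : finFieldType) (al : F) :
  S al 1 = ((#|F|)%:Z - 1) * ((#|F|)%:Z + S al 0).
Proof.
rewrite {1}/S; under eq_bigr => b bn do rewrite Psi1 //.
by rewrite sum_nz_const.
Qed.

Lemma inv_eq2 (F : finFieldType) (al y : F) : y != 0 -> (1 + al * - y^-1 == 0) = (y == al).
Proof.
move=> yn; rewrite mulrN subr_eq0; apply/eqP/eqP => [H|yal]; last by rewrite -yal divff.
by have := congr1 (fun z => z * y) H; rewrite mul1r mulfVK.
Qed.

Lemma Psi2 (F : finFieldType) (al : F) y : y != 0 ->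
  Psi al 2 y = ((#|F|)%:Z * ((#|F|)%:Z - 1) + S al 1) + (if y == al then (#|F|)%:Z * (#|F|)%:Z else 0).
Proof.
move=> yn; rewrite PsiS // Phi_z; last by rewrite oppr_eq0 invr_eq0.
rewrite Psi0 inv_eq2 //; case: ifP => _; ring.
Qed.

Lemma S2 (F : finFieldType) (al : F) : al != 0 ->
  S al 2 = ((#|F|)%:Z - 1) * ((#|F|)%:Z * ((#|F|)%:Z - 1) + S al 1) + (#|F|)%:Z * (#|F|)%:Z.
Proof.
move=> an; rewrite {1}/S; under eq_bigr => b bn do rewrite Psi2 //.
rewrite big_split /= sum_nz_const; congr (_ + _).
by rewrite (sum_nz_eq _ (fun _ => (#|F|)%:Z * (#|F|)%:Z)).
Qed.

Lemma Psi3 (F : finFieldType) (al : F) y : y != 0 ->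
  Psi al 3 y = (#|F|)%:Z * ((#|F|)%:Z + S al 0) + S al 2.
Proof.
move=> yn; have yn' : - y^-1 != 0 by rewrite oppr_eq0 invr_eq0.
by rewrite PsiS // Phi_z // Psi1.
Qed.

Lemma sumPhi0 (F : finFieldType) (al : F) k : \sum_(a : F) Phi al k.+1 a 0 = S al k.
Proof.
rewrite sumD0 (PhiS _ al k 0 0) eqxx /= add0r /S; apply: eq_bigr => b bn; rewrite /Psi; apply: eq_bigr => a _; by rewrite cwnz // mul1r.
Qed.

Lemma Phi00 (F : finFieldType) (al : F) x : Phi al 0 x 0 = if x != 0 then 1 else 0.
Proof. by rewrite /= mulr0 /cw addr0 oner_eq0. Qed.

Lemma PhiS00 (F : finFieldType) (al : F) k : Phi al k.+1 0 0 = 0.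
Proof. by rewrite PhiS eqxx. Qed.

Lemma sum_hub (F : finFieldType) (a b C c d : int) (z1 z2 : F) : z1 != 0 -> z2 != 0 ->
  \sum_(y : F | y != 0) ((a + (if y == z1 then b else 0)) * C * (c + (if y == z2 then d else 0)))
  = C * (((#|F|)%:Z - 1) * a * c + a * d + b * c + (if z1 == z2 then b * d else 0)).
Proof.
move=> z1n z2n.
transitivity (\sum_(y : F | y != 0) (C * (a * c) + (if y == z2 then C * (a * d) else 0)
   + (if y == z1 then C * (b * c) else 0) + (if y == z1 then (if z1 == z2 then C * (b * d) else 0) else 0))).
  apply: eq_bigr => y _.
  case E1: (y == z1); case E2: (y == z2).
  - have -> : z1 == z2 by rewrite -(eqP E1).
    ring.
  - have -> : (z1 == z2) = false by rewrite -(eqP E1) E2.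
    ring.
  - ring.
  - ring.
rewrite !big_split /= sum_nz_const.
rewrite (sum_nz_eq _ (fun _ => C * (a * d))) // (sum_nz_eq _ (fun _ => C * (b * c))) //.
rewrite (sum_nz_eq _ (fun _ => if z1 == z2 then C * (b * d) else 0)) //.
case: ifP => _; ring.
Qed.

Lemma sum_hub0 (F : finFieldType) (a b C D : int) (z1 : F) : z1 != 0 ->
  \sum_(y : F | y != 0) ((a + (if y == z1 then b else 0)) * C * D)
  = (((#|F|)%:Z - 1) * a + b) * C * D.
Proof.
move=> z1n; rewrite -!mulr_suml big_split /= sum_nz_const.
by rewrite (sum_nz_eq _ (fun _ => b)).
Qed.

Lemma Psi10 (F : finFieldType) (y : F) : y != 0 ->
  \sum_(a : F) Phi 1 0 a y = ((#|F|)%:Z - 1) + (if y == - 1^-1 then (#|F|)%:Z else 0).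
Proof. move=> yn; exact: (Psi_0nz _ (1 : F) y (oner_neq0 _)). Qed.

Lemma Psi11 (F : finFieldType) (y : F) : y != 0 ->
  \sum_(a : F) Phi 1 1 a y = (#|F|)%:Z + S (1 : F) 0.
Proof. move=> yn; exact: (Psi1 _ (1 : F) y yn). Qed.

Lemma N6 (F : finFieldType) :
  (XT_count (@E_adj 6) (fun _ => (1 : F)))%:Z =
   (#|F|)%:Z ^+ 6 + (#|F|)%:Z ^+ 4 + (#|F|)%:Z ^+ 3 + (#|F|)%:Z ^+ 2 + 1.
Proof.
rewrite E6_red hub zero_part; last first.
- exact: PhiS00.
- exact: PhiS00.
- exact: Phi00.
rewrite !sumPhi0.
rewrite (eq_bigr (fun y => (((#|F|)%:Z - 1) + (if y == - 1^-1 then (#|F|)%:Z else 0))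
    * ((#|F|)%:Z + S (1 : F) 0) * ((#|F|)%:Z + S (1 : F) 0))); last first.
  by move=> y yn; rewrite Psi10 // Psi11.
rewrite sum_hub0; last by rewrite oppr_eq0 invr1 oner_eq0.
rewrite S0 ?oner_neq0 //; ring.
Qed.

Lemma N7 (F : finFieldType) (al : F) : al != 0 ->
  (XT_count (@E_adj 7) (fun t : 'I_7 => if val t == 6%N then al else 1))%:Z =
  (#|F|)%:Z * (S (1 : F) 0 * S al 1) +
  ((#|F|)%:Z + S (1 : F) 0) * (((#|F|)%:Z - 1) * ((#|F|)%:Z - 1) * ((#|F|)%:Z * ((#|F|)%:Z - 1) + S al 1)
     + ((#|F|)%:Z - 1) * ((#|F|)%:Z * (#|F|)%:Z) + (#|F|)%:Z * ((#|F|)%:Z * ((#|F|)%:Z - 1) + S al 1)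
     + (if - 1 == al then (#|F|)%:Z * ((#|F|)%:Z * (#|F|)%:Z) else 0)).
Proof.
move=> an.
rewrite E7_red hub zero_part; last first.
- exact: PhiS00.
- exact: PhiS00.
- exact: Phi00.
rewrite !sumPhi0; congr (_ + _).
rewrite (eq_bigr (fun y => (((#|F|)%:Z - 1) + (if y == - 1^-1 then (#|F|)%:Z else 0))
    * ((#|F|)%:Z + S (1 : F) 0) * (((#|F|)%:Z * ((#|F|)%:Z - 1) + S al 1) + (if y == al then (#|F|)%:Z * (#|F|)%:Z else 0)))); last first.
  by move=> y yn; rewrite Psi10 // Psi11 // -(Psi2 _ al y yn).
rewrite sum_hub //; last by rewrite oppr_eq0 invr1 oner_eq0.
by rewrite invr1.
Qed.

Lemma N8 (F : finFieldType) :
  (XT_count (@E_adj 8) (fun _ => (1 : F)))%:Z =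
   (#|F|)%:Z ^+ 8 + (#|F|)%:Z ^+ 6 + (#|F|)%:Z ^+ 5 + (#|F|)%:Z ^+ 4 + (#|F|)%:Z ^+ 3 + (#|F|)%:Z ^+ 2 + 1.
Proof.
rewrite E8_red hub zero_part; last first.
- exact: PhiS00.
- exact: PhiS00.
- exact: Phi00.
rewrite !sumPhi0.
rewrite (eq_bigr (fun y => (((#|F|)%:Z - 1) + (if y == - 1^-1 then (#|F|)%:Z else 0))
    * ((#|F|)%:Z + S (1 : F) 0) * ((#|F|)%:Z * ((#|F|)%:Z + S (1 : F) 0) + S (1 : F) 2))); last first.
  by move=> y yn; rewrite Psi10 // Psi11 // -(Psi3 _ 1 y yn).
rewrite sum_hub0; last by rewrite oppr_eq0 invr1 oner_eq0.
rewrite S2 ?oner_neq0 // S1 S0 ?oner_neq0 //; ring.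
Qed.

Theorem mainTheorem18 (F : finFieldType) :
  let q : int := (#|F|)%:Z in
  [/\ (XT_count (@E_adj 6) (fun _ => (1 : F)))%:Z = q ^+ 6 + q ^+ 4 + q ^+ 3 + q ^+ 2 + 1,
      (forall alpha : F, alpha != 0 -> alpha != -1 ->
         (XT_count (@E_adj 7) (fun t : 'I_7 => if val t == 6%N then alpha else 1))%:Z
           = q ^+ 7 + q ^+ 5 - q ^+ 2 - 1),
      (XT_count (@E_adj 7) (fun t : 'I_7 => if val t == 6%N then -1 else 1 : F))%:Z
           = q ^+ 7 + 2 * q ^+ 5 + q ^+ 3 - q ^+ 2 - 1
    & (XT_count (@E_adj 8) (fun _ => (1 : F)))%:Z
           = q ^+ 8 + q ^+ 6 + q ^+ 5 + q ^+ 4 + q ^+ 3 + q ^+ 2 + 1].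
Proof.
move=> q; split.
- exact: N6.
- move=> al an am; rewrite N7 // S1 !S0 ?oner_neq0 //.
  rewrite eq_sym (negbTE am) /q; ring.
- have m1 : (-1 : F) != 0 by rewrite oppr_eq0 oner_eq0.
  rewrite N7 // S1 !S0 ?oner_neq0 // eqxx /q; ring.
- exact: N8.
Qed.
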